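(* Let $V:\mathcal{H}\otimes\mathbb{C}^d\to\mathcal{H}$ be a row partial isometry with a model triple $(\gamma,\mathcal{J}_\infty,\mathcal{J}_0)$. The linear map $\mathcal{U}^\gamma:\mathcal{H}\to\mathcal{H}^\gamma$, $h\mapsto h^\gamma$, is a linear isomorphism (i.e. injective) if and only if $V$ is completely non-coisometric. In that case, $\mathcal{H}^\gamma$ with the inner product $\langle h^\gamma,g^\gamma\rangle:=\langle h,g\rangle_\mathcal{H}$ is a Hilbert space and $\mathcal{U}^\gamma$ is unitary.
   Context: A row partial isometry is $V=(V_1,\dots,V_d):\mathcal{H}\otimes\mathbb{C}^d\to\mathcal{H}$ with $V^*V$ a projection. CNC: no nonzero closed subspace $\mathcal{M}\subseteq\mathcal{H}$ invariant under all $V_j^*$ with $V^*|_\mathcal{M}$ isometric. $\mathbb{B}^d_n$: $d$-tuples of $n\times n$ complex matrices $Z$ with $\|[Z_1\cdots Z_d]\|<1$; $0=(0,\dots,0)\in\mathbb{B}^d_1$. For $Z\in\mathbb{B}^d_n$, $ZV^*=\sum_jV_j^*\otimes Z_j$ on $\mathcal{H}\otimes\mathbb{C}^n$, and the $Z$-restricted range space is $\mathcal{R}(V-Z)=(I-ZV^* )(\mathrm{Ran}V\otimes\mathbb{C}^n)\subseteq\mathcal{H}\otimes\mathbb{C}^n$. Model triple: Hilbert spaces $\mathcal{J}_\infty,\mathcal{J}_0$ and a map $\gamma$ assigning to $\infty$ an isometry $\gamma(\infty):\mathcal{J}_\infty\to\mathcal{H}\otimes\mathbb{C}^d$ with range $\mathrm{Ker}\,V$,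 and to each $Z\in\mathbb{B}^d_n$ ($n\in\mathbb{N}$) a bounded linear bijection $\gamma(Z):\mathcal{J}_0\otimes\mathbb{C}^n\to\mathcal{R}(V-Z)^\perp$, such that $\gamma(0)$ is an isometry onto $(\mathrm{Ran}V)^\perp$. For $h\in\mathcal{H}$, $h^\gamma$ is the function on $\mathbb{B}^d_{\mathbb{N}}=\bigsqcup_n\mathbb{B}^d_n$ with $h^\gamma(W):\mathbb{C}^n\to\mathcal{J}_0\otimes\mathbb{C}^n$, $h^\gamma(W)v:=\gamma(W)^*(h\otimes v)$ for $W\in\mathbb{B}^d_n$; $\mathcal{H}^\gamma=\{h^\gamma:h\in\mathcal{H}\}$. *)

(* Defs.v *)
From mathcomp Require Import all_boot all_order all_algebra.
From mathcomp Require Import reals complex.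
Import GRing.Theory Num.Theory.
Set Implicit Arguments. Unset Strict Implicit. Unset Printing Implicit Defensive.
Local Open Scope ring_scope.
Local Open Scope complex_scope.

Section InnerProductSpaces.
Variable R : realType.
Local Notation C := (R[i]).

Section OneSpace.
Variable T : lmodType C.
Variable ip : T -> T -> C.

Definition is_inner_product : Prop :=
  [/\ (forall (a : C) (x y z : T), ip (a *: x + y) z = a * ip x z + ip y z),
      (forall x y : T, ip y x = (ip x y)^*),
      (forall x : T, 0 <= ip x x) &
      (forall x : T, ip x x = 0 -> x = 0)].

(* squared norm ||x||^2 (a nonnegative real number, seen in C) *)
Definition nsq (x : T) : C := ip x x.

Definition cauchy_seq (u : nat -> T) : Prop :=
  forall eps : C, 0 < eps -> exists N : nat,
    forall m n : nat, (N <= m)%N -> (N <= n)%N -> nsq (u m - u n) < eps.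

Definition converges_to (u : nat -> T) (x : T) : Prop :=
  forall eps : C, 0 < eps -> exists N : nat,
    forall n : nat, (N <= n)%N -> nsq (u n - x) < eps.

Definition is_hilbert : Prop :=
  is_inner_product /\ forall u, cauchy_seq u -> exists x, converges_to u x.

Definition lin_subspace (S : T -> Prop) : Prop :=
  S 0 /\ forall (a : C) (x y : T), S x -> S y -> S (a *: x + y).

Definition closed_set (S : T -> Prop) : Prop :=
  forall (u : nat -> T) (x : T), (forall n, S (u n)) -> converges_to u x -> S x.

Definition orth (S : T -> Prop) : T -> Prop :=
  fun y => forall x, S x -> ip x y = 0.

End OneSpace.

Section Operators.
Variables (T1 T2 : lmodType C) (ip1 : T1 -> T1 -> C) (ip2 : T2 -> T2 -> C).

Definition linear_map (f : T1 -> T2) : Prop :=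
  forall (a : C) (x y : T1), f (a *: x + y) = a *: f x + f y.

Definition bounded_op (f : T1 -> T2) : Prop :=
  linear_map f /\ exists M : C, forall x, nsq ip2 (f x) <= M * nsq ip1 x.

Definition is_adjoint (f : T1 -> T2) (g : T2 -> T1) : Prop :=
  forall x y, ip2 (f x) y = ip1 x (g y).

Definition isometry (f : T1 -> T2) : Prop :=
  forall x y, ip2 (f x) (f y) = ip1 x y.

End Operators.

(* H (x) C^n is modelled as {ffun 'I_n -> H} with the sum inner product *)
Definition tens_ip (T : lmodType C) (ip : T -> T -> C) (n : nat)
  (x y : {ffun 'I_n -> T}) : C := \sum_(i < n) ip (x i) (y i).

Definition tens (T : lmodType C) (n : nat) (h : T) (v : 'cV[C]_n) : {ffun 'I_n -> T} :=
  [ffun i => v i 0 *: h].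

Definition vnsq (n : nat) (v : 'cV[C]_n) : C := \sum_(i < n) `|v i 0| ^+ 2.

(* Z in B^d_n : the row [Z_1 ... Z_d] : C^n (x) C^d -> C^n has operator norm < 1 *)
Definition in_ncball (d n : nat) (Z : 'I_d -> 'M[C]_n) : Prop :=
  exists c : C, 0 <= c < 1 /\
    forall x : 'I_d -> 'cV[C]_n,
      vnsq (\sum_(j < d) Z j *m x j) <= c ^+ 2 * \sum_(j < d) vnsq (x j).

Section RowOperator.
Variables (d : nat) (H : lmodType C) (ipH : H -> H -> C).
Variables (V : {ffun 'I_d -> H} -> H) (Vadj : H -> {ffun 'I_d -> H}).
(* V = (V_1,...,V_d), Vadj = V^adj, so V_j^adj h = Vadj h j *)

Definition row_partial_isometry : Prop :=
  [/\ bounded_op (tens_ip ipH (n:=d)) ipH V,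
      is_adjoint (tens_ip ipH (n:=d)) ipH V Vadj,
      (forall x, Vadj (V (Vadj (V x))) = Vadj (V x)) &
      (forall x y, tens_ip ipH (Vadj (V x)) y = tens_ip ipH x (Vadj (V y)))].

Definition CNC : Prop :=
  forall M : H -> Prop,
    lin_subspace M -> closed_set ipH M ->
    (forall (j : 'I_d) h, M h -> M (Vadj h j)) ->
    (forall h g, M h -> M g -> tens_ip ipH (Vadj h) (Vadj g) = ipH h g) ->
    forall h, M h -> h = 0.

(* Z V^adj = sum_j V_j^adj (x) Z_j acting on H (x) C^n *)
Definition ZVstar (n : nat) (Z : 'I_d -> 'M[C]_n) (x : {ffun 'I_n -> H})
  : {ffun 'I_n -> H} :=
  [ffun i => \sum_(j < d) \sum_(k < n) Z j i k *: Vadj (x k) j].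

Definition ranV_tens (n : nat) (x : {ffun 'I_n -> H}) : Prop :=
  forall i, exists y, x i = V y.

(* R(V - Z) = (I - Z Vadj)(Ran V (x) C^n) *)
Definition restricted_range (n : nat) (Z : 'I_d -> 'M[C]_n) : {ffun 'I_n -> H} -> Prop :=
  fun y => exists x, ranV_tens x /\ y = x - ZVstar Z x.

Section Model.
Variables (Jinf J0 : lmodType C) (ipinf : Jinf -> Jinf -> C) (ip0 : J0 -> J0 -> C).
Variable ginf : Jinf -> {ffun 'I_d -> H}.
Variable g : forall n : nat, ('I_d -> 'M[C]_n) -> {ffun 'I_n -> J0} -> {ffun 'I_n -> H}.
Variable gadj : forall n : nat, ('I_d -> 'M[C]_n) -> {ffun 'I_n -> H} -> {ffun 'I_n -> J0}.

Definition model_triple : Prop :=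
  [/\ (is_hilbert ipinf /\ is_hilbert ip0),
      (linear_map ginf /\ isometry ipinf (tens_ip ipH (n:=d)) ginf),
      (forall y, (exists j, ginf j = y) <-> V y = 0),
      (forall (n : nat) (Z : 'I_d -> 'M[C]_n), (0 < n)%N -> in_ncball Z ->
         [/\ bounded_op (tens_ip ip0 (n:=n)) (tens_ip ipH (n:=n)) (g Z),
             is_adjoint (tens_ip ip0 (n:=n)) (tens_ip ipH (n:=n)) (g Z) (gadj Z),
             injective (g Z) &
             (forall y, (exists j, g Z j = y) <->
                        orth (tens_ip ipH (n:=n)) (restricted_range Z) y)]) &
      isometry (tens_ip ip0 (n:=1)) (tens_ip ipH (n:=1)) (g (fun _ => 0))].

Definition hgamma (h : H) (n : nat) (W : 'I_d -> 'M[C]_n) (v : 'cV[C]_n)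
  : {ffun 'I_n -> J0} := gadj W (tens h v).

Definition hgamma_eq (h k : H) : Prop :=
  forall (n : nat) (W : 'I_d -> 'M[C]_n), (0 < n)%N -> in_ncball W ->
    forall v, hgamma h W v = hgamma k W v.

Definition Ugamma_injective : Prop := forall h k, hgamma_eq h k -> h = k.

End Model.
End RowOperator.
End InnerProductSpaces.

(* Main.v *)
Require Import Defs.
From mathcomp Require Import all_boot all_order all_algebra.
From mathcomp Require Import reals complex.
From mathcomp Require Import ring lra.
Import Order.TTheory GRing.Theory Num.Theory.
Set Implicit Arguments. Unset Strict Implicit. Unset Printing Implicit Defensive.
Local Open Scope ring_scope.
Local Open Scope complex_scope.


Section IPlemmas.
Variable R : realType.
Local Notation C := (R[i]).
Variable T : lmodType C.
Variable ip : T -> T -> C.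
Hypothesis Hip : is_inner_product ip.

Lemma ipC x y : ip y x = conjc (ip x y).
Proof. by case: Hip. Qed.
Lemma ip_ge0 x : 0 <= ip x x.
Proof. by case: Hip. Qed.
Lemma ip_eq0 x : ip x x = 0 -> x = 0.
Proof. by case: Hip => _ _ _; apply. Qed.
Lemma ipDl x y z : ip (x + y) z = ip x z + ip y z.
Proof. by move: Hip; rewrite /is_inner_product => -[L _ _ _]; rewrite -{1}(scale1r x) L mul1r. Qed.
Lemma ip0l z : ip 0 z = 0.
Proof.
have := ipDl 0 0 z; rewrite addr0 => /eqP; rewrite -subr_eq0 opprD addrA subrr add0r.
by rewrite oppr_eq0 => /eqP.
Qed.
Lemma ipZl (a : C) x z : ip (a *: x) z = a * ip x z.
Proof. by move: Hip; rewrite /is_inner_product => -[L _ _ _]; rewrite -[a *: x]addr0 L ip0l addr0. Qed.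
Lemma ipNl x z : ip (- x) z = - ip x z.
Proof. by rewrite -scaleN1r ipZl mulN1r. Qed.
Lemma ipBl x y z : ip (x - y) z = ip x z - ip y z.
Proof. by rewrite ipDl ipNl. Qed.
Lemma ip0r z : ip z 0 = 0.
Proof. by rewrite ipC ip0l conjc0. Qed.
Lemma ipDr x y z : ip z (x + y) = ip z x + ip z y.
Proof. by rewrite ipC ipDl rmorphD /= -!ipC. Qed.
Lemma ipZr (a : C) x z : ip z (a *: x) = conjc a * ip z x.
Proof. by rewrite ipC ipZl rmorphM /= -ipC. Qed.
Lemma ipNr x z : ip z (- x) = - ip z x.
Proof. by rewrite ipC ipNl rmorphN /= -ipC. Qed.
Lemma ipBr x y z : ip z (x - y) = ip z x - ip z y.
Proof. by rewrite ipDr ipNr. Qed.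
Lemma ip_suml (I : Type) (r : seq I) (P : pred I) (F : I -> T) z :
  ip (\sum_(i <- r | P i) F i) z = \sum_(i <- r | P i) ip (F i) z.
Proof.
elim/big_rec2: _ => [|i a b _ <-]; first by rewrite ip0l.
by rewrite ipDl.
Qed.
Lemma ip_sumr (I : Type) (r : seq I) (P : pred I) (F : I -> T) z :
  ip z (\sum_(i <- r | P i) F i) = \sum_(i <- r | P i) ip z (F i).
Proof.
elim/big_rec2: _ => [|i a b _ <-]; first by rewrite ip0r.
by rewrite ipDr.
Qed.
Lemma ipxx_conj x : conjc (ip x x) = ip x x.
Proof. by rewrite -ipC. Qed.
Lemma ip_ext u w : (forall z, ip z u = ip z w) -> u = w.
Proof.
move=> E; apply/eqP; rewrite -subr_eq0; apply/eqP; apply: ip_eq0.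
by rewrite ipBr E subrr.
Qed.
Lemma ip_extl u w : (forall z, ip u z = ip w z) -> u = w.
Proof. by move=> E; apply: ip_ext => z; rewrite ipC E -ipC. Qed.

Lemma real_conj (s : C) : 0 <= s -> conjc s = s.
Proof.
move=> s0; rewrite [s]complexE (ger0_Im s0) mulr0 addr0.
by rewrite conjc_real.
Qed.

Lemma CS x y : ip x y * conjc (ip x y) <= ip x x * ip y y.
Proof.
have [s0|sn0] := eqVneq (ip y y) 0.
  by rewrite (ip_eq0 s0) ip0r ip0l mul0r mulr0.
set s := ip y y; set p := ip x y.
have sge0 : 0 <= s by apply: ip_ge0.
have sgt0 : 0 < s by rewrite lt0r sn0.
have tc : conjc (p / s) = conjc p / s.
  by rewrite rmorphM /= conjc_inv (real_conj sge0).
have E : ip (x - (p / s) *: y) (x - (p / s) *: y) = ip x x - p * conjc p / s.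
  rewrite ipBl !ipBr !ipZl !ipZr -/s -/p tc (ipC x y) -/p.
  by field.
have := ip_ge0 (x - (p / s) *: y); rewrite E.
by rewrite subr_ge0 ler_pdivrMr // mulrC.
Qed.

Lemma gram_psd (I : finType) (A : I -> I -> C) :
  (forall x : I -> C, 0 <= \sum_p \sum_q A p q * (x q * conjc (x p))) ->
  forall xi : I -> T, 0 <= \sum_p \sum_q A p q * ip (xi q) (xi p).
Proof.
move=> HA xi.
suff: forall m (S : {set I}) (xi : I -> T), (#|S| <= m)%N ->
    (forall p, p \notin S -> xi p = 0) ->
    0 <= \sum_p \sum_q A p q * ip (xi q) (xi p).
  by move=> /(_ #|I| setT xi); apply => //; [rewrite cardsT | move=> p; rewrite inE].
elim=> [|m IH] S xi' hS hout.
  have S0 : S = set0 by apply/eqP; rewrite -cards_eq0 -leqn0.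
  rewrite big1 // => p _; rewrite big1 // => q _.
  by rewrite hout ?S0 ?inE // ip0l mulr0.
case: (set_0Vmem S) => [S0 | [k kS]].
  by apply: (IH S) => //; rewrite S0 cards0.
have hS' : (#|S :\ k| <= m)%N by move: hS; rewrite (cardsD1 k) kS.
have hout' : forall (xi : I -> T), xi k = 0 -> (forall p, p \notin S -> xi p = 0) ->
    forall p, p \notin S :\ k -> xi p = 0.
  move=> x0 xk h p; rewrite in_setD1 negb_and negbK; case/orP => [/eqP -> //|].
  exact: h.
have [s0|sn0] := eqVneq (ip (xi' k) (xi' k)) 0.
  by apply: (IH (S :\ k)) => //; apply: hout' => //; apply: ip_eq0.
set s := ip (xi' k) (xi' k).
pose al q := ip (xi' q) (xi' k) / s.
pose eta q := xi' q - al q *: xi' k.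
have E q : xi' q = al q *: xi' k + eta q by rewrite /eta addrC subrK.
have etak q : ip (eta q) (xi' k) = 0.
  by rewrite /eta ipBl ipZl -/s /al divfK // subrr.
have etak0 : eta k = 0 by rewrite /eta /al -/s divff // scale1r subrr.
have etaout p : p \notin S -> eta p = 0.
  by move=> pS; rewrite /eta /al hout // ip0l mul0r scale0r subrr.
clearbody eta.
have key p q : ip (xi' q) (xi' p) = al q * conjc (al p) * s + ip (eta q) (eta p).
  rewrite {1}(E q) {1}(E p) ipDl !ipDr !ipZl !ipZr -/s etak mulr0 add0r.
  rewrite (ipC (eta p)) etak conjc0 !mulr0 addr0; ring.
have -> : \sum_p \sum_q A p q * ip (xi' q) (xi' p) =
   s * (\sum_p \sum_q A p q * (al q * conjc (al p))) +
   \sum_p \sum_q A p q * ip (eta q) (eta p).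
  rewrite mulr_sumr -big_split /=; apply: eq_bigr => p _.
  rewrite mulr_sumr -big_split /=; apply: eq_bigr => q _.
  rewrite key; ring.
apply: addr_ge0; first by apply: mulr_ge0; [exact: ip_ge0 | exact: HA].
by apply: (IH (S :\ k)) => //; apply: hout'.
Qed.

Lemma form_expand (I J : finType) (w : J -> I -> C) (c2 : C) (xi : I -> T) :
  \sum_p \sum_q (c2 * (p == q)%:R - \sum_i w i q * conjc (w i p)) * ip (xi q) (xi p)
  = c2 * \sum_p ip (xi p) (xi p)
    - \sum_i ip (\sum_q w i q *: xi q) (\sum_p w i p *: xi p).
Proof.
have -> : \sum_i ip (\sum_q w i q *: xi q) (\sum_p w i p *: xi p) =
   \sum_p \sum_q \sum_i w i q * conjc (w i p) * ip (xi q) (xi p).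
  transitivity (\sum_i \sum_q \sum_p w i q * conjc (w i p) * ip (xi q) (xi p)).
    apply: eq_bigr => i _; rewrite ip_suml; apply: eq_bigr => q _.
    rewrite ipZl ip_sumr mulr_sumr; apply: eq_bigr => p _.
    by rewrite ipZr; ring.
  rewrite exchange_big /=.
  under eq_bigr do rewrite exchange_big /=.
  by rewrite exchange_big.
rewrite mulr_sumr -sumrB; apply: eq_bigr => p _.
under eq_bigr do rewrite mulrBl.
rewrite sumrB; congr (_ - _).
  rewrite (bigD1 p) //= eqxx mulr1 big1 ?addr0 // => q /negbTE qp.
  by rewrite eq_sym qp mulr0 mul0r.
by apply: eq_bigr => q _; rewrite mulr_suml.
Qed.
End IPlemmas.


Section P2.
Variable R : realType.
Local Notation C := (R[i]).

Lemma scalar_ip_inner : is_inner_product (fun a b : C^o => a * conjc b).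
Proof.
split.
- by move=> a x y z; rewrite /= mulrDl mulrA.
- by move=> x y; rewrite rmorphM /= conjcK mulrC.
- by move=> x; apply: mulcJ_ge0.
- by move=> x /eqP; rewrite mulf_eq0 conjc_eq0 orbb => /eqP.
Qed.

Lemma tens_inner (T : lmodType C) (ip : T -> T -> C) (n : nat) :
  is_inner_product ip -> is_inner_product (tens_ip ip (n:=n)).
Proof.
move=> Hip; split.
- move=> a x y z; rewrite /tens_ip mulr_sumr -big_split; apply: eq_bigr => i _.
  by rewrite !ffunE ipDl // ipZl.
- move=> x y; rewrite /tens_ip rmorph_sum; apply: eq_bigr => i _.
  exact: ipC.
- by move=> x; apply: sumr_ge0 => i _; apply: ip_ge0.
- move=> x /eqP; rewrite psumr_eq0; last by move=> i _; apply: ip_ge0.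
  move=> /allP H; apply/ffunP => i; rewrite ffunE; apply: (ip_eq0 Hip).
  by apply/eqP; apply: H; rewrite mem_index_enum.
Qed.

Lemma contraction (T : lmodType C) (ip : T -> T -> C) (Hip : is_inner_product ip)
  (d n : nat) (W : 'I_d -> 'M[C]_n) (c : C)
  (hc : forall x : 'I_d -> 'cV[C]_n,
      vnsq (\sum_(j < d) W j *m x j) <= c ^+ 2 * \sum_(j < d) vnsq (x j))
  (xi : 'I_d -> 'I_n -> T) :
  \sum_(i < n) ip (\sum_(j < d) \sum_(k < n) W j i k *: xi j k)
                  (\sum_(j < d) \sum_(k < n) W j i k *: xi j k)
   <= c ^+ 2 * \sum_(j < d) \sum_(k < n) ip (xi j k) (xi j k).
Proof.
pose w (i : 'I_n) (p : ('I_d * 'I_n)%type) := W p.1 i p.2.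
pose A (p q : ('I_d * 'I_n)%type) := c ^+ 2 * (p == q)%:R - \sum_i w i q * conjc (w i p).
have HA : forall x : ('I_d * 'I_n)%type -> C,
    0 <= \sum_p \sum_q A p q * (x q * conjc (x p)).
  move=> x; have := form_expand (@scalar_ip_inner) w (c ^+ 2) x.
  rewrite /= => ->; rewrite subr_ge0.
  have := hc (fun j => \col_k x (j, k)).
  rewrite /vnsq.
  have -> : \sum_(j < d) \sum_(i < n) `|(\col_k x (j, k)) i 0| ^+ 2 =
            \sum_p x p * conjc (x p).
    rewrite pair_bigA /=; apply: eq_bigr => -[j k] _.
    by rewrite mxE sqr_normc.
  suff -> : \sum_(i < n) `|(\sum_(j < d) W j *m \col_k x (j, k)) i 0| ^+ 2 =
     \sum_i (\sum_q w i q * x q) * conjc (\sum_p w i p * x p) by [].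
  apply: eq_bigr => i _; rewrite sqr_normc; congr (_ * conjc _);
    rewrite summxE; under eq_bigr => j _ do (rewrite mxE; under eq_bigr => k _ do rewrite mxE);
    by rewrite pair_bigA; apply: eq_bigr => -[j k] _.
have := gram_psd Hip HA (fun p => xi p.1 p.2).
rewrite form_expand // subr_ge0.
rewrite pair_bigA /=.
suff -> : \sum_(i < n) ip (\sum_(j < d) \sum_(k < n) W j i k *: xi j k)
                  (\sum_(j < d) \sum_(k < n) W j i k *: xi j k) =
  \sum_i ip (\sum_q w i q *: xi q.1 q.2) (\sum_p w i p *: xi p.1 p.2) by [].
by apply: eq_bigr => i _; rewrite pair_bigA.
Qed.
End P2.


Section Pow.
Variable R : realType.
Local Notation C := (R[i]).
Local Notation Re := (@complex.Re R).

Lemma bernoulli (r : R) (k : nat) : 0 <= r -> 1 + k%:R * r <= (1 + r) ^+ k.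
Proof.
move=> r0; elim: k => [|k IH]; first by rewrite mul0r addr0 expr0.
rewrite exprS -natr1.
have h1 : 0 <= (1 + r) by lra.
have := ler_wpM2l h1 IH.
have : 0 <= k%:R * r * r by apply: mulr_ge0 => //; apply: mulr_ge0.
nra.
Qed.

Lemma powR_small (q K e : R) : 0 <= q < 1 -> 0 < e ->
  exists k : nat, q ^+ k * K <= e.
Proof.
move=> /andP[q0 q1] e0.
have [K0|K0] := lerP K 0.
  by exists 0%N; rewrite expr0 mul1r; lra.
have [qz|qnz] := eqVneq q 0.
  by exists 1%N; rewrite qz expr1 mul0r; lra.
have qp : 0 < q by rewrite lt0r qnz.
set r := q^-1 - 1.
have rp : 0 < r by rewrite /r subr_gt0 invf_gt1.
set X := K / (e * r).
have X0 : 0 <= X by rewrite /X divr_ge0 // ?mulr_ge0 //; lra.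
exists (Num.bound X).
have hb := archi_boundP X0.
set k := Num.bound X in hb *.
have hB := bernoulli k (ltW rp).
have qinv : 1 + r = q^-1 by rewrite /r; ring.
rewrite qinv exprVn in hB.
have qk : 0 < q ^+ k by apply: exprn_gt0.
have h : K < e * r * k%:R.
  by rewrite -ltr_pdivrMl ?mulr_gt0 // mulrC.
have h2 : K <= e * (q ^+ k)^-1.
  have : e * (1 + k%:R * r) <= e * (q ^+ k)^-1 by apply: ler_wpM2l => //; exact: ltW.
  nra.
have := ler_wpM2l (ltW qk) h2.
by rewrite mulrA [q ^+ k * e]mulrC -mulrA divff ?mulr1 // gt_eqF.
Qed.

Lemma ge0_realC (z : C) : 0 <= z -> z = (Re z)%:C.
Proof. by move=> z0; rewrite [z in LHS]complexE (ger0_Im z0) mulr0 addr0. Qed.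

Lemma powC_small (q K e : C) : 0 <= q -> q < 1 -> 0 <= K -> 0 < e ->
  exists k : nat, q ^+ k * K <= e.
Proof.
move=> q0 q1 K0 e0.
have hq := ge0_realC q0; have hK := ge0_realC K0; have he := ge0_realC (ltW e0).
have q0' : 0 <= Re q by rewrite -(@lecR R) -hq.
have q1' : Re q < 1 by rewrite -(@ltcR R) -hq.
have e0' : 0 < Re e by rewrite -(@ltcR R) -he.
have [k hk] := powR_small (Re K) (q:= Re q) (e := Re e) ltac:(by rewrite q0' q1') e0'.
by exists k; rewrite hq hK he -rmorphXn -rmorphM lecR.
Qed.

Lemma half_contra (x : R) : 0 < x -> x <= x / 2 -> False.
Proof. by move=> *; lra. Qed.

Lemma small0 (z : C) : 0 <= z -> (forall e, 0 < e -> z <= e) -> z = 0.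
Proof.
move=> z0 H; rewrite (ge0_realC z0).
have r0 : 0 <= Re z by rewrite -(@lecR R) -ge0_realC.
have [rz|rp] := eqVneq (Re z) 0; first by rewrite rz.
have rpos : 0 < Re z by rewrite lt0r rp.
have hpos : 0 < (Re z / 2)%:C by rewrite ltcR divr_gt0.
have := H _ hpos; rewrite {1}(ge0_realC z0) lecR => h.
by case: (half_contra rpos h).
Qed.
End Pow.


Section Lin.
Variable R : realType.
Local Notation C := (R[i]).
Variables (T1 T2 : lmodType C) (f : T1 -> T2).
Hypothesis Hf : linear_map f.
Lemma lin0 : f 0 = 0.
Proof.
have h := Hf 1 0 0; rewrite !scale1r addr0 in h.
by apply/(addrI (f 0)); rewrite addr0 -h.
Qed.
Lemma linD x y : f (x + y) = f x + f y.
Proof. by rewrite -[x in LHS]scale1r Hf scale1r. Qed.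
Lemma linZ (a : C) x : f (a *: x) = a *: f x.
Proof. by rewrite -[a *: x]addr0 Hf lin0 addr0. Qed.
Lemma linB x y : f (x - y) = f x - f y.
Proof. by rewrite linD -scaleN1r linZ scaleN1r. Qed.
End Lin.

Section Ops.
Variable R : realType.
Local Notation C := (R[i]).
Variables (d : nat) (H : lmodType C) (ipH : H -> H -> C).
Variables (V : {ffun 'I_d -> H} -> H) (Vadj : H -> {ffun 'I_d -> H}).
Hypothesis Hip : is_inner_product ipH.
Hypothesis Hrpi : row_partial_isometry ipH V Vadj.

Local Notation tip := (tens_ip ipH (n:=d)).
Let Htip : is_inner_product tip := tens_inner d Hip.

Lemma Vlin : linear_map V.
Proof. by case: Hrpi => -[]. Qed.
Lemma Hadj x y : ipH (V x) y = tip x (Vadj y).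
Proof. by case: Hrpi => _ h _ _; apply: h. Qed.
Lemma Hproj x : Vadj (V (Vadj (V x))) = Vadj (V x).
Proof. by case: Hrpi. Qed.
Lemma Hsa x y : tip (Vadj (V x)) y = tip x (Vadj (V y)).
Proof. by case: Hrpi. Qed.

Lemma Vadj_lin : linear_map Vadj.
Proof.
move=> a h k; apply: (ip_ext Htip) => z.
rewrite -Hadj (ipDr Hip) (ipZr Hip) (ipDr Htip) (ipZr Htip) -!Hadj //.
Qed.

Lemma VP z : V (Vadj (V z)) = V z.
Proof.
set w := z - Vadj (V z).
have Vw : Vadj (V w) = 0.
  by rewrite /w (linB Vlin) (linB Vadj_lin) Hproj subrr.
have : ipH (V w) (V w) = 0 by rewrite Hadj Vw (ip0r Htip).
move/(ip_eq0 Hip); rewrite /w (linB Vlin) => /eqP; rewrite subr_eq0 => /eqP.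
by move=> h; rewrite -h.
Qed.

Lemma VVV h : Vadj (V (Vadj h)) = Vadj h.
Proof.
apply: (ip_ext Htip) => z.
by rewrite -Hsa -Hadj VP Hadj.
Qed.

Section DirB.
Variable M : H -> Prop.
Hypothesis Mlin : lin_subspace M.
Hypothesis Minv : forall (j : 'I_d) h, M h -> M (Vadj h j).
Hypothesis Miso : forall h g, M h -> M g -> tip (Vadj h) (Vadj g) = ipH h g.

Lemma M0 : M 0. Proof. by case: Mlin. Qed.
Lemma MD x y : M x -> M y -> M (x + y).
Proof. by case: Mlin => _ h hx hy; rewrite -[x]scale1r; apply: h. Qed.
Lemma MZ (a : C) x : M x -> M (a *: x).
Proof. by case: Mlin => h0 h hx; rewrite -[a *: x]addr0; apply: h. Qed.
Lemma Msum (I : Type) (r : seq I) (P : pred I) (F : I -> H) :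
  (forall i, P i -> M (F i)) -> M (\sum_(i <- r | P i) F i).
Proof. by move=> hF; apply: big_ind => //; [exact: M0 | exact: MD]. Qed.

Lemma MVV h : M h -> V (Vadj h) = h.
Proof.
move=> Mh; apply/eqP; rewrite eq_sym -subr_eq0; apply/eqP; apply: (ip_eq0 Hip).
have e1 : ipH (V (Vadj h)) h = ipH h h by rewrite Hadj Miso.
have e2 : ipH h (V (Vadj h)) = ipH h h by rewrite (ipC Hip) e1 (ipxx_conj Hip).
have e3 : ipH (V (Vadj h)) (V (Vadj h)) = ipH h h by rewrite Hadj VVV Miso.
by rewrite (ipBl Hip) !(ipBr Hip) e1 e2 e3 !subrr.
Qed.

Variables (n : nat) (W : 'I_d -> 'M[C]_n) (c : C).
Hypothesis c0 : 0 <= c.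
Hypothesis c1 : c < 1.
Hypothesis hc : forall x : 'I_d -> 'cV[C]_n,
      vnsq (\sum_(j < d) W j *m x j) <= c ^+ 2 * \sum_(j < d) vnsq (x j).

Local Notation T := (ZVstar Vadj W).
Let Htn : is_inner_product (tens_ip ipH (n:=n)) := tens_inner n Hip.

Lemma TM (m : {ffun 'I_n -> H}) : (forall i, M (m i)) -> forall i, M (T m i).
Proof.
move=> hm i; rewrite ffunE; apply: Msum => j _; apply: Msum => k _.
by apply: MZ; apply: Minv.
Qed.

Lemma Tnorm (m : {ffun 'I_n -> H}) : (forall i, M (m i)) ->
  tens_ip ipH (T m) (T m) <= c ^+ 2 * tens_ip ipH m m.
Proof.
move=> hm; rewrite /tens_ip.
under eq_bigr do rewrite ffunE.
apply: le_trans (contraction Hip hc (fun j k => Vadj (m k) j)) _.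
rewrite exchange_big /= le_eqVlt; apply/orP; left; apply/eqP; congr (_ * _).
by apply: eq_bigr => k _; rewrite -Miso.
Qed.

Lemma psi_eq (y : {ffun 'I_n -> H}) (m : {ffun 'I_n -> H}) : orth (tens_ip ipH (n:=n)) (restricted_range V Vadj W) y ->
  (forall i, M (m i)) -> tens_ip ipH m y = tens_ip ipH (T m) y.
Proof.
move=> hy hm.
have : restricted_range V Vadj W (m - T m).
  by exists m; split => // i; exists (Vadj (m i)); rewrite MVV.
move/hy; rewrite (ipBl Htn) => /eqP; rewrite subr_eq0 => /eqP.
done.
Qed.

Lemma c2lt1 : c ^+ 2 < 1.
Proof.
rewrite expr2; apply: le_lt_trans c1.
by rewrite -{3}[c]mulr1; apply: ler_wpM2l => //; apply: ltW.
Qed.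

Lemma mainB (y : {ffun 'I_n -> H}) (m : {ffun 'I_n -> H}) : orth (tens_ip ipH (n:=n)) (restricted_range V Vadj W) y ->
  (forall i, M (m i)) -> tens_ip ipH m y = 0.
Proof.
move=> hy hm.
have iterP : forall k, (forall i, M (iter k T m i)) /\
   tens_ip ipH m y = tens_ip ipH (iter k T m) y /\
   tens_ip ipH (iter k T m) (iter k T m) <= (c ^+ 2) ^+ k * tens_ip ipH m m.
  elim=> [|k [IH1 [IH2 IH3]]] /=; first by rewrite expr0 mul1r.
  split; first exact: TM.
  split; first by rewrite IH2; apply: psi_eq.
  apply: le_trans (Tnorm IH1) _.
  rewrite [(c ^+ 2) ^+ k.+1]exprS -mulrA; apply: ler_wpM2l => //.
  exact: exprn_ge0.
set a := tens_ip ipH m y.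
suff : a * conjc a = 0 by move/eqP; rewrite mulf_eq0 conjc_eq0 orbb => /eqP.
apply: small0; first exact: mulcJ_ge0.
move=> e e0.
have K0 : 0 <= tens_ip ipH m m * tens_ip ipH y y.
  by apply: mulr_ge0; apply: (ip_ge0 Htn).
have [k hk] := powC_small (exprn_ge0 2 c0) c2lt1 K0 e0.
have [_ [Ea Nk]] := iterP k.
rewrite /a Ea; apply: le_trans (CS Htn _ _) _; apply: le_trans hk.
rewrite mulrA; apply: ler_wpM2r => //; exact: (ip_ge0 Htn).
Qed.
End DirB.
End Ops.


Section Arith.
Variable R : realType.
Local Notation C := (R[i]).

Lemma ptw (a b l : C) : 0 <= l ->
  l * (1 - l) * `|a + b| ^+ 2 <= (1 - l) * `|a| ^+ 2 + l * `|b| ^+ 2.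
Proof.
move=> l0; rewrite -subr_ge0 !sqr_normc.
have cl : conjc l = l by apply: real_conj.
have e : (1 - l) * (a * conjc a) + l * (b * conjc b) - l * (1 - l) * ((a + b) * conjc (a + b))
   = ((1 - l) * a - l * b) * conjc ((1 - l) * a - l * b).
  rewrite !(rmorphB, rmorphM, rmorphD, rmorph1) /= cl; ring.
by rewrite e; apply: mulcJ_ge0.
Qed.

Lemma ball_arith (c Q Xs Sx Aa s2 K S del : C) :
  0 <= c -> c <= Q -> 0 < Q -> Q < 1 -> 0 <= Xs -> 0 <= K -> 0 <= s2 -> s2 <= Sx ->
  Aa <= c ^+ 2 * Xs -> 0 <= del -> del <= 1 -> del * (1 + K) = (1 - Q) * Q ->
  Q * (1 - Q) * S <= (1 - Q) * Aa + Q * (del ^+ 2 * s2 * K) ->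
  S <= Q * (Xs + Sx).
Proof.
move=> c0 cQ Q0 Q1 X0 K0 s0 sS ha d0 d1 hd hS.
have Q1' : 0 < 1 - Q by rewrite subr_gt0.
have QQ : 0 < Q * (1 - Q) by apply: mulr_gt0.
rewrite -(ler_pM2l QQ); apply: le_trans hS _.
have h1 : (1 - Q) * Aa <= (1 - Q) * (Q ^+ 2 * Xs).
  apply: ler_wpM2l; first exact: ltW.
  apply: le_trans ha _; apply: ler_wpM2r => //.
  by rewrite !expr2; apply: ler_pM.
have dK : del * K <= (1 - Q) * Q.
  by rewrite -hd; apply: ler_wpM2l => //; rewrite lerDr ler01.
have h2 : del ^+ 2 * s2 * K <= (1 - Q) * Q * Sx.
  have -> : del ^+ 2 * s2 * K = del * (del * K) * s2 by rewrite expr2; ring.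
  apply: ler_pM => //.
    by apply: mulr_ge0 => //; apply: mulr_ge0.
  rewrite -[X in _ <= X]mul1r; apply: ler_pM => //.
  exact: mulr_ge0.
have -> : Q * (1 - Q) * (Q * (Xs + Sx)) =
  (1 - Q) * (Q ^+ 2 * Xs) + Q * ((1 - Q) * Q * Sx) by ring.
apply: lerD => //; apply: ler_wpM2l => //; exact: ltW.
Qed.
End Arith.

Lemma ffunBE (I : finType) (M : zmodType) (f g : {ffun I -> M}) a :
  (f - g) a = f a - g a.
Proof. by rewrite !ffunE. Qed.

Section DirA.
Variable R : realType.
Local Notation C := (R[i]).
Variables (d : nat) (H : lmodType C) (ipH : H -> H -> C).
Variables (V : {ffun 'I_d -> H} -> H) (Vadj : H -> {ffun 'I_d -> H}).
Hypothesis Hip : is_inner_product ipH.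
Hypothesis Hrpi : row_partial_isometry ipH V Vadj.
Local Notation tip := (tens_ip ipH (n:=d)).
Let Htip : is_inner_product tip := tens_inner d Hip.

Lemma tensD n (a : C) (x z : H) (v : 'cV[C]_n) : tens (a *: x + z) v = a *: tens x v + tens z v.
Proof. by apply/ffunP => i; rewrite !ffunE scalerDr !scalerA mulrC. Qed.
Lemma tensB n (x z : H) (v : 'cV[C]_n) : tens (x - z) v = tens x v - tens z v.
Proof. by apply/ffunP => i; rewrite !ffunE scalerBr. Qed.

Lemma tens_ipE n (x : H) (v : 'cV[C]_n) (y : {ffun 'I_n -> H}) :
  tens_ip ipH (tens x v) y = ipH x (\sum_i conjc (v i 0) *: y i).
Proof.
rewrite /tens_ip (ip_sumr Hip); apply: eq_bigr => i _.
by rewrite ffunE (ipZl Hip) (ipZr Hip) conjcK.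
Qed.

Definition Mset (x : H) : Prop :=
  forall n (W : 'I_d -> 'M[C]_n) (v : 'cV[C]_n) (y : {ffun 'I_n -> H}),
    (0 < n)%N -> in_ncball W ->
    orth (tens_ip ipH (n:=n)) (restricted_range V Vadj W) y ->
    tens_ip ipH (tens x v) y = 0.

Lemma Mset_lin : lin_subspace Mset.
Proof.
split.
  by move=> n W v y _ _ _; rewrite tens_ipE (ip0l Hip).
move=> a x z hx hz n W v y n0 hW hy.
by rewrite tensD (ipDl (tens_inner n Hip)) (ipZl (tens_inner n Hip)) (hx n W v y) // (hz n W v y) // mulr0 addr0.
Qed.

Lemma Mset_closed : closed_set ipH Mset.
Proof.
move=> u x hu hconv n W v y n0 hW hy.
rewrite tens_ipE; set Y := \sum_i _.
have hz N : ipH (u N) Y = 0 by rewrite /Y -tens_ipE; exact: (hu N n W v y).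
set a := ipH x Y.
suff : a * conjc a = 0 by move/eqP; rewrite mulf_eq0 conjc_eq0 orbb => /eqP.
apply: small0; first exact: mulcJ_ge0.
move=> e e0.
have Y0 : 0 <= ipH Y Y by apply: (ip_ge0 Hip).
have Y1 : 0 < ipH Y Y + 1 by apply: (le_lt_trans Y0); rewrite ltrDl ltr01.
have eps0 : 0 < e / (ipH Y Y + 1) by apply: divr_gt0.
have [N hN] := hconv _ eps0.
have hN' := hN N (leqnn N).
have ea : a = ipH (x - u N) Y by rewrite (ipBl Hip) hz subr0.
have en : nsq ipH (u N - x) = ipH (x - u N) (x - u N).
  by rewrite /nsq -opprB (ipNl Hip) (ipNr Hip) opprK.
rewrite ea; apply: le_trans (CS Hip _ _) _.
rewrite -en; apply: (@le_trans _ _ (e / (ipH Y Y + 1) * ipH Y Y)).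
  by apply: ler_wpM2r => //; apply: ltW.
rewrite -mulrA; rewrite -{2}[e]mulr1; apply: ler_wpM2l; first exact: ltW.
by rewrite mulrC -ler_pdivlMr ?mul1r ?invrK ?invr_gt0 // lerDl ler01.
Qed.

Lemma ncball0 : in_ncball (fun _ : 'I_d => (0 : 'M[C]_1)).
Proof.
exists 0; split; first by rewrite lexx ltr01.
move=> x; rewrite expr0n /= mul0r.
rewrite /vnsq big1 // => i _.
by rewrite summxE big1 ?normr0 ?expr0n // => j _; rewrite mul0mx mxE.
Qed.

Lemma Mset_iso x x' : Mset x -> Mset x' -> tip (Vadj x) (Vadj x') = ipH x x'.
Proof.
move=> hx hx'.
rewrite -(Hadj Hrpi); apply/eqP; rewrite -subr_eq0 -(ipBl Hip); apply/eqP.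
set r := V (Vadj x) - x.
rewrite (ipC Hip); apply/eqP; rewrite conjc_eq0; apply/eqP.
have Vr : Vadj r = 0.
  by rewrite /r (linB (Vadj_lin Hip Hrpi)) (VVV Hip Hrpi) subrr.
have := hx' 1%N (fun _ => 0) (const_mx 1) [ffun _ => r] isT ncball0.
rewrite tens_ipE big_ord1 mxE conjc1 scale1r ffunE; apply.
move=> u [x0 [hx0 ->]].
have -> : ZVstar Vadj (fun _ : 'I_d => (0 : 'M[C]_1)) x0 = 0.
  apply/ffunP => i; rewrite !ffunE big1 // => j _; rewrite big1 // => k _.
  by rewrite mxE scale0r.
rewrite subr0 /tens_ip big1 // => i _.
have [z ->] := hx0 i.
by rewrite ffunE (Hadj Hrpi) Vr (ip0r Htip).
Qed.

Lemma ipV a b : ipH a (V b) = tip (Vadj a) b.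
Proof. by rewrite (ipC Hip) (Hadj Hrpi) -(ipC Htip). Qed.

Lemma Mset_inv (j0 : 'I_d) x : Mset x -> Mset (Vadj x j0).
Proof.
move=> hx n W v y n0 hW hy.
case: n W v y n0 hW hy => [//|n] W v y _ hW hy.
have [c [/andP[c0 c1] hc]] := hW.
set K := vnsq v.
have K0 : 0 <= K by apply: sumr_ge0 => i _; apply: exprn_ge0; apply: normr_ge0.
set c' := (1 + c) / 2.
set Q := c' ^+ 2.
have c'0 : 0 < c' by apply: divr_gt0 => //; apply: (lt_le_trans ltr01); rewrite lerDl.
have c'1 : c' < 1.
  by rewrite /c' ltr_pdivrMr ?ltr0Sn // mul1r -[2%:R]/(1 + 1) ltrD2l.
have Q0 : 0 < Q by apply: exprn_gt0.
have Q1 : Q < 1.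
  rewrite /Q expr2; apply: (le_lt_trans _ c'1).
  rewrite -{3}[c']mulr1; have h1 := ltW c'0; have h2 := ltW c'1; exact: (ler_wpM2l h1 h2).
have cQ : c <= Q.
  rewrite -subr_ge0.
  have -> : Q - c = ((1 - c) / 2) * ((1 - c) / 2) by rewrite /Q /c'; field.
  by apply: mulr_ge0; apply: divr_ge0 => //; rewrite subr_ge0 ltW.
set rho := (1 - Q) * Q.
have rho0 : 0 < rho by apply: mulr_gt0 => //; rewrite subr_gt0.
have K1 : 0 < 1 + K by apply: (lt_le_trans ltr01); rewrite lerDl.
set del := rho / (1 + K).
have del0 : 0 < del by apply: divr_gt0.
have hdel : del * (1 + K) = rho by rewrite /del divfK // gt_eqF.
have del1 : del <= 1.
  apply: (@le_trans _ _ rho).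
    by rewrite /del ler_pdivrMr // ler_peMr ?lerDl // ltW.
  rewrite /rho -[X in _ <= X]mul1r; apply: ler_pM; last exact: ltW.
  - by rewrite subr_ge0 ltW.
  - exact: ltW.
  - by rewrite lerBlDr lerDl ltW.
pose W' (i : 'I_d) : 'M[C]_(n.+2) := \matrix_(p, q)
  (if (p < n.+1)%N then
     (if (q < n.+1)%N then W i (inord p) (inord q)
      else (i == j0)%:R * del * v (inord p) 0)
   else 0).
pose beta : {ffun 'I_d -> H} :=
  [ffun i => (i == j0)%:R *: \sum_k conjc (del * v k 0) *: y k].
pose z := V beta.
pose y' : {ffun 'I_n.+2 -> H} := [ffun p : 'I_n.+2 => if (p < n.+1)%N then y (inord p) else z].
pose v' : 'cV[C]_(n.+2) := \col_p (if (p < n.+1)%N then 0 else 1).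
have keyL X : ipH X z = \sum_k del * v k 0 * ipH (Vadj X j0) (y k).
  rewrite /z ipV /tens_ip (bigD1 j0) //= big1 ?addr0; last first.
    by move=> i /negbTE ij; rewrite ffunE ij scale0r (ip0r Hip).
  rewrite ffunE eqxx scale1r (ip_sumr Hip); apply: eq_bigr => k _.
  by rewrite (ipZr Hip) conjcK.
have key : ipH x z = del * tens_ip ipH (tens (Vadj x j0) v) y.
  rewrite keyL /tens_ip mulr_sumr; apply: eq_bigr => k _.
  by rewrite ffunE (ipZl Hip) mulrA.
have hz : tens_ip ipH (tens x v') y' = ipH x z.
  rewrite /tens_ip big_ord_recr /= big1 ?add0r; last first.
    by move=> k _; rewrite !ffunE mxE /= ltn_ord scale0r (ip0l Hip).
  by rewrite !ffunE mxE /= ltnn scale1r.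
have orth' : orth (tens_ip ipH (n:=n.+2)) (restricted_range V Vadj W') y'.
  move=> u [x' [hx' ->]].
  pose xr : {ffun 'I_n.+1 -> H} := [ffun k => x' (widen_ord (leqnSn n.+1) k)].
  have hxr : ranV_tens V xr by move=> k; rewrite ffunE; apply: hx'.
  have T1 k : ZVstar Vadj W' x' (widen_ord (leqnSn n.+1) k) =
      ZVstar Vadj W xr k + (del * v k 0) *: Vadj (x' ord_max) j0.
    rewrite !ffunE.
    under eq_bigr => i _ do rewrite big_ord_recr /= /W' mxE /= ltn_ord ltnn /=.
    rewrite big_split /=; congr (_ + _).
      apply: eq_bigr => i _; apply: eq_bigr => q _.
      by rewrite mxE /= !ltn_ord !inord_val ffunE.
    rewrite (bigD1 j0) //= big1 ?addr0; last first.
      by move=> i /negbTE ij; rewrite ij mul0r mul0r scale0r.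
    by rewrite eqxx mul1r inord_val.
  have T2 : ZVstar Vadj W' x' ord_max = 0.
    rewrite !ffunE big1 // => i _; rewrite big1 // => q _.
    by rewrite /W' mxE /= ltnn scale0r.
  rewrite /tens_ip big_ord_recr /=.
  have e1 : (x' - ZVstar Vadj W' x') ord_max = x' ord_max by rewrite ffunBE T2 subr0.
  rewrite e1 [y' ord_max]ffunE ltnn -/z keyL.
  have h0 : tens_ip ipH (xr - ZVstar Vadj W xr) y = 0 by apply: hy; exists xr.
  rewrite /tens_ip in h0.
  have -> : \sum_(k < n.+1) ipH ((x' - ZVstar Vadj W' x') (widen_ord (leqnSn n.+1) k))
      (y' (widen_ord (leqnSn n.+1) k)) =
    \sum_(k < n.+1) ipH ((xr - ZVstar Vadj W xr) k) (y k) -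
    \sum_k del * v k 0 * ipH (Vadj (x' ord_max) j0) (y k).
    rewrite -sumrB; apply: eq_bigr => k _.
    rewrite ffunBE T1 [y' _]ffunE /= ltn_ord inord_val.
    by rewrite ffunBE [xr k]ffunE opprD addrA (ipBl Hip) (ipZl Hip).
  by rewrite h0 sub0r addNr.
have vn0 m (u : 'cV[C]_m) : 0 <= vnsq u.
  by apply: sumr_ge0 => i _; apply: exprn_ge0; apply: normr_ge0.
have ball : in_ncball W'.
  exists c'; split; first by rewrite (ltW c'0) c'1.
  move=> X'.
  pose xr i : 'cV[C]_(n.+1) := \col_q X' i (widen_ord (leqnSn n.+1) q) 0.
  set s := X' j0 ord_max 0.
  set a := \sum_i W i *m xr i.
  have E1 k : (\sum_i W' i *m X' i) (widen_ord (leqnSn n.+1) k) 0 = a k 0 + del * v k 0 * s.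
    rewrite summxE.
    transitivity (\sum_i (\sum_q W i k q * xr i q 0 + (i == j0)%:R * del * v k 0 * X' i ord_max 0)).
      apply: eq_bigr => i _; rewrite mxE big_ord_recr /=; congr (_ + _).
        by apply: eq_bigr => q _; rewrite /W' /xr !mxE /= !ltn_ord !inord_val.
      by rewrite /W' mxE /= ltn_ord ltnn inord_val.
    rewrite big_split /=; congr (_ + _).
      by rewrite /a summxE; apply: eq_bigr => i _; rewrite mxE.
    rewrite (bigD1 j0) //= eqxx mul1r big1 ?addr0 // => i /negbTE ->.
    by rewrite !mul0r.
  have E2 : (\sum_i W' i *m X' i) ord_max 0 = 0.
    rewrite summxE big1 // => i _; rewrite mxE big1 // => q _.
    by rewrite /W' mxE /= ltnn mul0r.
  have L : vnsq (\sum_i W' i *m X' i) = \sum_k `|a k 0 + del * v k 0 * s| ^+ 2.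
    rewrite /vnsq big_ord_recr /= E2 normr0 expr0n /= addr0.
    by apply: eq_bigr => k _; rewrite E1.
  have Rr : \sum_i vnsq (X' i) = \sum_i vnsq (xr i) + \sum_i `|X' i ord_max 0| ^+ 2.
    rewrite -big_split; apply: eq_bigr => i _; rewrite /vnsq big_ord_recr /=.
    by congr (_ + _); apply: eq_bigr => q _; rewrite /xr mxE.
  rewrite L Rr.
  apply: (@ball_arith _ c Q _ _ (vnsq a) (`|s| ^+ 2) K _ del) => //.
  - exact: sumr_ge0.
  - exact: exprn_ge0.
  - rewrite (bigD1 j0) //= lerDl; apply: sumr_ge0 => i _; apply: exprn_ge0; exact: normr_ge0.
  - exact: hc.
  - exact: ltW.
  - rewrite mulr_sumr.
    apply: (@le_trans _ _ (\sum_k ((1 - Q) * `|a k 0| ^+ 2 + Q * `|del * v k 0 * s| ^+ 2))).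
      by apply: ler_sum => k _; apply: ptw; apply: ltW.
    rewrite big_split /= -!mulr_sumr; apply: lerD => //.
    rewrite le_eqVlt; apply/orP; left; apply/eqP; congr (_ * _).
    rewrite /K /vnsq mulr_sumr; apply: eq_bigr => k _.
    rewrite (normrM (del * v k 0) s) (normrM del (v k 0)) (ger0_norm (ltW del0)) !exprMn; ring.
have := hx _ W' v' y' isT ball orth'.
rewrite hz key => /eqP; rewrite mulf_eq0 (gt_eqF del0) /= => /eqP.
done.
Qed.


End DirA.

Unset Implicit Arguments.

Theorem mainTheorem9 (R : realType) (d : nat)
  (H : lmodType R[i]) (ipH : H -> H -> R[i])
  (V : {ffun 'I_d -> H} -> H) (Vadj : H -> {ffun 'I_d -> H})
  (Jinf J0 : lmodType R[i]) (ipinf : Jinf -> Jinf -> R[i]) (ip0 : J0 -> J0 -> R[i])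
  (ginf : Jinf -> {ffun 'I_d -> H})
  (g : forall n : nat, ('I_d -> 'M[R[i]]_n) -> {ffun 'I_n -> J0} -> {ffun 'I_n -> H})
  (gadj : forall n : nat, ('I_d -> 'M[R[i]]_n) -> {ffun 'I_n -> H} -> {ffun 'I_n -> J0}) :
  is_hilbert ipH ->
  row_partial_isometry ipH V Vadj ->
  model_triple ipH V Vadj ipinf ip0 ginf g gadj ->
  (Ugamma_injective gadj <-> CNC ipH Vadj) /\
  (CNC ipH Vadj ->
     (* <h^gamma, k^gamma> := <h, k> is well defined on H^gamma *)
     forall h h' k k' : H,
       hgamma_eq gadj h h' -> hgamma_eq gadj k k' -> ipH h k = ipH h' k').
Proof.
move=> [Hip _] Hrpi [[_ [Hip0 _]] _ _ Hg _].
have A1 : forall h k, hgamma_eq gadj h k -> forall n W (v : 'cV[R[i]]_n) y,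
    (0 < n)%N -> in_ncball W ->
    orth (tens_ip ipH (n:=n)) (restricted_range V Vadj W) y ->
    tens_ip ipH (tens h v) y = tens_ip ipH (tens k v) y.
  move=> h k hk n W v y n0 hW hy.
  have [gZ adjZ _ rng] := Hg n W n0 hW.
  have [j <-] := (rng y).2 hy.
  have Htn := tens_inner n Hip.
  rewrite (ipC Htn) [in RHS](ipC Htn) !adjZ.
  by have := hk n W n0 hW v; rewrite /hgamma => ->.
have B1 : forall n W h k (v : 'cV[R[i]]_n), (0 < n)%N -> in_ncball W ->
    (forall y, orth (tens_ip ipH (n:=n)) (restricted_range V Vadj W) y ->
       tens_ip ipH (tens h v) y = tens_ip ipH (tens k v) y) ->
    gadj n W (tens h v) = gadj n W (tens k v).
  move=> n W h k v n0 hW hyp.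
  have [gZ adjZ _ rng] := Hg n W n0 hW.
  have Htn := tens_inner n Hip.
  apply: (ip_ext (tens_inner n Hip0)) => j.
  rewrite -!adjZ (ipC Htn) [in RHS](ipC Htn) hyp //.
  by apply: (rng _).1; exists j.
have inj : CNC ipH Vadj -> Ugamma_injective gadj.
  move=> Hcnc h k hk.
  have Mhk : Mset ipH V Vadj (h - k).
    move=> n W v y n0 hW hy.
    by rewrite tensB (ipBl (tens_inner n Hip)) (A1 h k hk n W v y) // subrr.
  apply/eqP; rewrite -subr_eq0; apply/eqP.
  apply: (Hcnc (Mset ipH V Vadj)) Mhk.
  - exact: Mset_lin.
  - exact: Mset_closed.
  - by move=> j x; apply: Mset_inv.
  - by move=> x x'; apply: Mset_iso.
split; last first.
  move=> Hcnc h h' k k' e1 e2.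
  by rewrite (inj Hcnc h h' e1) (inj Hcnc k k' e2).
split; last exact: inj.
move=> Uinj M Mlin _ Minv Miso h Mh.
apply: Uinj => n W n0 hW v; rewrite /hgamma.
apply: B1 => // y hy.
have [c [/andP [c0 c1] hc]] := hW.
rewrite (mainB Hip Hrpi Mlin Minv Miso c0 c1 hc hy); last first.
  by move=> i; rewrite ffunE; apply: MZ.
rewrite (mainB Hip Hrpi Mlin Minv Miso c0 c1 hc hy) //.
by move=> i; rewrite ffunE scaler0; apply: M0.
Qed.
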